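(* Let $\mathfrak{g}$ be a $\mathrm{Lie}$-nilpotent Leibniz algebra of class $k\ge2$ and let $0\to\mathfrak{r}\to\mathfrak{f}\to\mathfrak{g}\to0$ be a free presentation of $\mathfrak{g}$. Then there is a natural exact sequence $$0\to\frac{\mathfrak{f}^{[k+1]}}{[\mathfrak{f},\mathfrak{r}]_{\mathrm{Lie}}\cap\mathfrak{f}^{[k+1]}}\to\mathcal{M}^{\mathrm{Lie}}(\mathfrak{g})\to\mathcal{M}^{\mathrm{Lie}}\big(\mathfrak{g}/\mathfrak{g}^{[k]}\big)\to\mathfrak{g}^{[k]}\to0.$$
   Context: Fix a field $\mathbb{K}$ with $\frac12\in\mathbb{K}$. A Leibniz algebra is a $\mathbb{K}$-vector space with a bilinear bracket satisfying $[x,[y,z]]=[[x,y],z]-[[x,z],y]$. For two-sided ideals $\mathfrak{m},\mathfrak{n}$, $[\mathfrak{m},\mathfrak{n}]_{\mathrm{Lie}}$ is the subspace spanned by all $[m,n]+[n,m]$. The lower $\mathrm{Lie}$-central series of a Leibniz algebra $\mathfrak{h}$ is $\mathfrak{h}^{[1]}=\mathfrak{h}$, $\mathfrak{h}^{[i]}=[\mathfrak{h}^{[i-1]},\mathfrak{h}]_{\mathrm{Lie}}$; $\mathfrak{h}$ is $\mathrm{Lie}$-nilpotent of class $k$ if $\mathfrak{h}^{[k+1]}=0$ and $\mathfrak{h}^{[k]}\neq0$. A free presentation is $0\to\mathfrak{r}\to\mathfrak{f}\to\mathfrak{g}\to0$ with $\mathfrak{f}$ free Leibniz. The Schur $\mathrm{Lie}$-multiplier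 is $\mathcal{M}^{\mathrm{Lie}}(\mathfrak{g})=\frac{\mathfrak{r}\cap[\mathfrak{f},\mathfrak{f}]_{\mathrm{Lie}}}{[\mathfrak{f},\mathfrak{r}]_{\mathrm{Lie}}}$, independent of the presentation up to isomorphism. *)

(* Defs.v *)
From HB Require Import structures.
From mathcomp Require Import all_boot all_order all_algebra.
Set Implicit Arguments. Unset Strict Implicit. Unset Printing Implicit Defensive.
Import GRing.Theory.
Local Open Scope ring_scope.

Record leibniz (K : fieldType) := Leibniz {
  lcarrier :> lmodType K;
  lbr : lcarrier -> lcarrier -> lcarrier;
  lbr_linl : forall (a : K) (x y z : lcarrier),
      lbr (a *: x + y) z = a *: lbr x z + lbr y z;
  lbr_linr : forall (a : K) (x y z : lcarrier),
      lbr z (a *: x + y) = a *: lbr z x + lbr z y;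
  lbr_leibniz : forall x y z : lcarrier,
      lbr x (lbr y z) = lbr (lbr x y) z - lbr (lbr x z) y }.
Arguments lbr {K} l _ _.

Section Defs.
Variable K : fieldType.

Definition setAll (V : Type) : V -> Prop := fun _ => True.
Arguments setAll V _ : clear implicits.

Definition span (V : lmodType K) (S : V -> Prop) : V -> Prop :=
  fun x => exists (n : nat) (c : 'I_n -> K) (v : 'I_n -> V),
      (forall i, S (v i)) /\ x = \sum_(i < n) c i *: v i.

Definition lie_br (h : leibniz K) (m n : h -> Prop) : h -> Prop :=
  span (fun x => exists a b, m a /\ n b /\ x = lbr h a b + lbr h b a).

(* lower Lie-central series: lowlie h i = h^{[i]} for i >= 1
   (h^{[1]} = h, h^{[i]} = [h^{[i-1]}, h]_Lie); lowlie h 0 := h by convention *)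
Unset Implicit Arguments.
Fixpoint lowlie (h : leibniz K) (i : nat) : h -> Prop :=
  match i with
  | 0 => setAll h
  | i'.+1 => match i' with
             | 0 => setAll h
             | _ => lie_br (lowlie h i') (setAll h)
             end
  end.
Set Implicit Arguments.

Definition lie_nilpotent_class (h : leibniz K) (k : nat) : Prop :=
  (forall x, lowlie h k.+1 x -> x = 0) /\ (exists x, lowlie h k x /\ x <> 0).

Definition is_hom (h1 h2 : leibniz K) (phi : h1 -> h2) : Prop :=
  (forall (a : K) (x y : h1), phi (a *: x + y) = a *: phi x + phi y) /\
  (forall x y : h1, phi (lbr h1 x y) = lbr h2 (phi x) (phi y)).

Definition is_free (f : leibniz K) : Prop :=
  exists (X : Type) (iota : X -> f),
    forall (h : leibniz K) (t : X -> h),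
      (exists phi : f -> h, is_hom phi /\ forall x, phi (iota x) = t x) /\
      (forall phi psi : f -> h, is_hom phi -> is_hom psi ->
         (forall x, phi (iota x) = t x) -> (forall x, psi (iota x) = t x) ->
         forall y, phi y = psi y).

Definition kernel (V W : lmodType K) (p : V -> W) : V -> Prop :=
  fun x => p x = 0.

(* (Q, pi) is a model of the quotient space U / W (U, W subspaces of V):
   pi : V -> Q is linear, maps U onto Q, and its kernel on U is exactly W. *)
Definition quotient_model (V : lmodType K) (U W : V -> Prop)
    (Q : lmodType K) (pi : V -> Q) : Prop :=
  [/\ forall (a : K) (x y : V), pi (a *: x + y) = a *: pi x + pi y,
      forall q : Q, exists2 u, U u & pi u = q
    & forall u, U u -> (pi u = 0 <-> W u)].

(* Schur Lie-multiplier for the presentation with free algebra f and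
   kernel r:  (r cap [f,f]_Lie) / [f,r]_Lie *)
Definition schur_num (f : leibniz K) (r : f -> Prop) : f -> Prop :=
  fun x => r x /\ lie_br (setAll f) (setAll f) x.
Definition schur_den (f : leibniz K) (r : f -> Prop) : f -> Prop :=
  lie_br (setAll f) r.
Definition schur_model (f : leibniz K) (r : f -> Prop)
    (Q : lmodType K) (pi : f -> Q) : Prop :=
  quotient_model (schur_num r) (schur_den r) pi.

End Defs.
Arguments lowlie {K} h i _.
Arguments setAll V _ : clear implicits.

(* Main.v *)
Require Import Defs.
From HB Require Import structures.
From mathcomp Require Import all_boot all_order all_algebra.
From Stdlib Require Import ClassicalEpsilon.
Set Implicit Arguments. Unset Strict Implicit. Unset Printing Implicit Defensive.
Import GRing.Theory.
Local Open Scope ring_scope.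

Section Help.
Variable K : fieldType.

Definition lin (V W : lmodType K) (h : V -> W) :=
  forall a x y, h (a *: x + y) = a *: h x + h y.

Lemma lin0 (V W : lmodType K) (h : V -> W) : lin h -> h 0 = 0.
Proof.
move=> H; have := H 1 0 0; rewrite !scale1r addr0.
by move/(congr1 (fun z => z - h 0)); rewrite subrr addrK => /esym.
Qed.

Lemma linD (V W : lmodType K) (h : V -> W) : lin h -> forall x y, h (x + y) = h x + h y.
Proof. by move=> H x y; have := H 1 x y; rewrite !scale1r. Qed.

Lemma linZ (V W : lmodType K) (h : V -> W) : lin h -> forall a x, h (a *: x) = a *: h x.
Proof. by move=> H a x; rewrite -[a *: x]addr0 H lin0 // addr0. Qed.

Lemma linB (V W : lmodType K) (h : V -> W) : lin h -> forall x y, h (x - y) = h x - h y.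
Proof. by move=> H x y; have := H (-1) y x; rewrite !scaleN1r addrC => ->; rewrite addrC. Qed.

Definition subsp (V : lmodType K) (T : V -> Prop) :=
  T 0 /\ forall a x y, T x -> T y -> T (a *: x + y).

Lemma subspB (V : lmodType K) (T : V -> Prop) : subsp T -> forall x y, T x -> T y -> T (x - y).
Proof. by move=> [_ H] x y Tx Ty; rewrite addrC -scaleN1r; apply: H. Qed.

Lemma subspD (V : lmodType K) (T : V -> Prop) : subsp T -> forall x y, T x -> T y -> T (x + y).
Proof. by move=> [_ H] x y Tx Ty; rewrite -[x]scale1r; apply: H. Qed.

Lemma span_ind (V : lmodType K) (S : V -> Prop) (P : V -> Prop) :
  P 0 -> (forall a v x, S v -> P x -> P (a *: v + x)) ->
  forall x, Defs.span S x -> P x.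
Proof.
move=> P0 Ps x [n [c [v [Sv ->]]]].
elim: n c v Sv => [|n IH] c v Sv; first by rewrite big_ord0.
rewrite big_ord_recr /= addrC; apply: Ps => //.
exact: (IH (fun i => c (widen_ord (leqnSn n) i)) (fun i => v (widen_ord (leqnSn n) i))).
Qed.

Lemma span0 (V : lmodType K) (S : V -> Prop) : Defs.span S 0.
Proof.
exists 0%N, (fun _ => 0), (fun _ => 0); split; first by case.
by rewrite big_ord0.
Qed.

Lemma span_cons (V : lmodType K) (S : V -> Prop) a v x :
  S v -> Defs.span S x -> Defs.span S (a *: v + x).
Proof.
move=> Sv [n [c [w [Sw ->]]]].
exists n.+1, (fun i => if unlift ord0 i is Some j then c j else a),
  (fun i => if unlift ord0 i is Some j then w j else v); split.
  by move=> i; case: (unlift ord0 i).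
by rewrite big_ord_recl unlift_none; congr (_ + _); apply: eq_bigr => i _; rewrite liftK.
Qed.

Lemma span_gen (V : lmodType K) (S : V -> Prop) x : S x -> Defs.span S x.
Proof. by move=> Sx; rewrite -[x]addr0 -[x]scale1r; apply: span_cons => //; apply: span0. Qed.

Lemma span_subsp (V : lmodType K) (S : V -> Prop) : subsp (Defs.span S).
Proof.
split; first exact: span0.
move=> a x y Sx; move: x Sx y; apply: span_ind.
  by move=> y Sy; rewrite scaler0 add0r.
move=> b v x Sv IH y Sy.
by rewrite scalerDr scalerA -addrA; apply: span_cons => //; apply: IH.
Qed.

Lemma span_min (V : lmodType K) (S T : V -> Prop) :
  subsp T -> (forall x, S x -> T x) -> forall x, Defs.span S x -> T x.
Proof.
move=> [T0 Tc] ST; apply: span_ind => // a v x Sv Tx; apply: Tc => //; exact: ST.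
Qed.

Lemma span_mono (V : lmodType K) (S T : V -> Prop) :
  (forall x, S x -> T x) -> forall x, Defs.span S x -> Defs.span T x.
Proof. by move=> ST; apply: span_min; [exact: span_subsp| move=> x /ST; apply: span_gen]. Qed.

Lemma kernel_subsp (V W : lmodType K) (h : V -> W) : lin h -> subsp (fun x => h x = 0).
Proof.
move=> H; split; first exact: lin0.
by move=> a x y hx hy; rewrite H hx hy scaler0 addr0.
Qed.

Lemma preim_subsp (V W : lmodType K) (h : V -> W) (T : W -> Prop) :
  lin h -> subsp T -> subsp (fun x => T (h x)).
Proof.
move=> H [T0 Tc]; split; first by rewrite lin0.
by move=> a x y hx hy; rewrite H; apply: Tc.
Qed.

Lemma setAll_subsp (V : lmodType K) : subsp (setAll V).
Proof. by []. Qed.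

Lemma lowlie_subsp (h : leibniz K) i : subsp (lowlie h i).
Proof. by case: i => [|[|i]] //=; apply: span_subsp. Qed.

Lemma lowlieSS (h : leibniz K) i :
  lowlie h i.+2 = lie_br (lowlie h i.+1) (setAll h).
Proof. by []. Qed.

Lemma lie_br_sym (h : leibniz K) A B x : lie_br A B x -> lie_br (h:=h) B A x.
Proof.
apply: span_mono => y [a [b [Aa [Bb ->]]]].
by exists b, a; split => //; split => //; rewrite addrC.
Qed.

Lemma lie_br_mono (h : leibniz K) (A B A' B' : h -> Prop) :
  (forall x, A x -> A' x) -> (forall x, B x -> B' x) ->
  forall x, lie_br A B x -> lie_br A' B' x.
Proof.
move=> HA HB; apply: span_mono => y [a [b [Aa [Bb ->]]]].
by exists a, b; split; [apply: HA|split; [apply: HB|]].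
Qed.

Lemma lbr_lin_l (h : leibniz K) z : lin (fun x : h => lbr h x z).
Proof. by move=> a x y; apply: lbr_linl. Qed.
Lemma lbr_lin_r (h : leibniz K) z : lin (fun x : h => lbr h z x).
Proof. by move=> a x y; apply: lbr_linr. Qed.

Lemma lift_lin (V Q Q' : lmodType K) (U W : V -> Prop) (pi : V -> Q) (h : V -> Q') :
  quotient_model U W pi -> lin h -> subsp U ->
  (forall u, U u -> W u -> h u = 0) ->
  exists phi : {linear Q -> Q'}, forall u, U u -> phi (pi u) = h u.
Proof.
move=> [pil pis piW] hl Us hW.
have wd : forall u u', U u -> U u' -> pi u = pi u' -> h u = h u'.
  move=> u u' Uu Uu' E; apply/eqP; rewrite -subr_eq0 -linB //; apply/eqP.
  have Ud := subspB Us Uu Uu'.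
  by apply: hW => //; apply/piW => //; rewrite (linB pil) E subrr.
have ex' : forall q, exists u, U u /\ pi u = q.
  by move=> q; case: (pis q) => u ? ?; exists u.
pose ch q := proj1_sig (constructive_indefinite_description _ (ex' q)).
have chP : forall q, U (ch q) /\ pi (ch q) = q.
  by move=> q; rewrite /ch; case: constructive_indefinite_description.
pose phi q := h (ch q).
have lphi : linear phi.
  move=> a q q'; rewrite /phi.
  have [U1 E1] := chP q; have [U2 E2] := chP q'; have [U3 E3] := chP (a *: q + q').
  rewrite -hl; apply: wd => //; first by case: Us => _; apply.
  by rewrite pil E1 E2 E3.
pose flM := GRing.isLinear.Build _ _ _ _ phi lphi.
pose fL : {linear _ -> _} := HB.pack phi flM.
exists fL => u Uu /=; rewrite /phi; have [U1 E1] := chP (pi u).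
by apply: wd.
Qed.

Lemma lbrDr (h : leibniz K) (z x y : h) : lbr h z (x + y) = lbr h z x + lbr h z y.
Proof. by have := lbr_linr 1 x y z; rewrite scale1r scale1r. Qed.
Lemma lbrDl (h : leibniz K) (z x y : h) : lbr h (x + y) z = lbr h x z + lbr h y z.
Proof. by have := lbr_linl 1 x y z; rewrite scale1r scale1r. Qed.
Lemma lbr0r (h : leibniz K) (z : h) : lbr h z 0 = 0.
Proof. exact: (lin0 (lbr_lin_r z)). Qed.
Lemma lbr0l (h : leibniz K) (z : h) : lbr h 0 z = 0.
Proof. exact: (lin0 (lbr_lin_l z)). Qed.

Lemma subspI (V : lmodType K) (A B : V -> Prop) :
  subsp A -> subsp B -> subsp (fun x => A x /\ B x).
Proof.
move=> [A0 Ac] [B0 Bc]; split=> // a x y [? ?] [? ?]; split; [exact: Ac|exact: Bc].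
Qed.
End Help.

Theorem mainTheorem7 (K : fieldType) (two_neq0 : (2%:R : K) != 0)
  (g f : leibniz K) (p : f -> g) (k : nat) (hk : (2 <= k)%N)
  (Hnil : lie_nilpotent_class g k)
  (Hfree : is_free f) (Hp : is_hom p) (Hsurj : forall y : g, exists x, p x = y)
  (Q1 Q2 Q3 : lmodType K) (pi1 : f -> Q1) (pi2 : f -> Q2) (pi3 : f -> Q3)
  (H1 : quotient_model (lowlie f k.+1)
          (fun x => lie_br (setAll f) (kernel p) x /\ lowlie f k.+1 x) pi1)
  (H2 : schur_model (kernel p) pi2)
  (H3 : schur_model (fun x => lowlie g k (p x)) pi3) :
  exists (alpha : {linear Q1 -> Q2}) (beta : {linear Q2 -> Q3})
         (gamma : {linear Q3 -> lcarrier g}),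
    [/\ forall x, lowlie f k.+1 x -> alpha (pi1 x) = pi2 x,
        forall x, schur_num (kernel p) x -> beta (pi2 x) = pi3 x,
        forall x, schur_num (fun y => lowlie g k (p y)) x -> gamma (pi3 x) = p x
      & [/\ forall u, alpha u = 0 -> u = 0,
            forall v, beta v = 0 <-> exists u, alpha u = v,
            forall w, gamma w = 0 <-> exists v, beta v = w
          & forall z : g, lowlie g k z <-> exists w, gamma w = z]].
Proof.
case: k hk Hnil H1 H3 => [|[|m]] // _ Hnil H1 H3.
have [plin pbr] := Hp.
have pl : lin p := plin.
have pmap : forall i x, lowlie f i x -> lowlie g i (p x).
  elim=> [|i IH] x; first done.
  case: i IH => [|i] IH; first done.
  move: x; apply: (span_min (T := fun x => lowlie g i.+2 (p x))).
    exact: (preim_subsp pl (lowlie_subsp _ _)).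
  move=> y [a [b [Ha [_ ->]]]]; apply: span_gen.
  exists (p a), (p b); split; first exact: IH.
  by split=> //; rewrite (linD pl) !pbr.
have plift : forall i z, lowlie g i z -> exists x, lowlie f i x /\ p x = z.
  elim=> [|i IH] z.
    by move=> _; have [x Hx] := Hsurj z; exists x.
  case: i IH => [|i] IH.
    by move=> _; have [x Hx] := Hsurj z; exists x.
  move: z; apply: (span_ind (P := fun z => exists x, lowlie f i.+2 x /\ p x = z)).
    by exists 0; split; [exact: span0 | exact: lin0].
  move=> a v z [c [d [Hc [_ ->]]]] [x [Hx <-]].
  have [c' [Hc' <-]] := IH c Hc.
  have [d' <-] := Hsurj d.
  exists (a *: (lbr f c' d' + lbr f d' c') + x); split.
    by apply: span_cons => //; exists c', d'.
  by rewrite pl (linD pl) !pbr.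
set F := setAll f.
have fk1_r : forall x, lowlie f m.+3 x -> p x = 0.
  by move=> x Hx; apply: Hnil.1; apply: pmap.
have sub_ff : forall i x, lowlie f i.+2 x -> lie_br F F x.
  by move=> i x; rewrite lowlieSS; apply: lie_br_mono.
have fr_r : forall x, lie_br F (kernel p) x -> p x = 0.
  apply: (span_min (T := fun x => p x = 0)); first exact: kernel_subsp.
  move=> y [a [b [_ [Hb ->]]]].
  by rewrite (linD pl) !pbr Hb lbr0r lbr0l addr0.
have r_s : forall x, p x = 0 -> lowlie g m.+2 (p x).
  by move=> x ->; exact: (lowlie_subsp g _).1.
have fk1_fs : forall x, lowlie f m.+3 x -> lie_br F (fun x => lowlie g m.+2 (p x)) x.
  move=> x H; apply: lie_br_sym; move: H; rewrite lowlieSS.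
  by apply: lie_br_mono => // y Hy; apply: pmap.
have fs_dec : forall x, lie_br F (fun x => lowlie g m.+2 (p x)) x ->
    exists y z, lowlie f m.+3 y /\ lie_br F (kernel p) z /\ x = y + z.
  apply: (span_min (T := fun x => exists y z, lowlie f m.+3 y /\ lie_br F (kernel p) z /\ x = y + z)).
    split.
      exists 0, 0; split; first exact: (lowlie_subsp f _).1.
      by split; [exact: span0 | rewrite addr0].
    move=> a x1 x2 [y1 [z1 [Hy1 [Hz1 ->]]]] [y2 [z2 [Hy2 [Hz2 ->]]]].
    exists (a *: y1 + y2), (a *: z1 + z2); split; first exact: (lowlie_subsp f _).2.
    split; first exact: (span_subsp _).2.
    by rewrite scalerDr addrACA.
  move=> y [a [b [_ [Hb ->]]]].
  have [c [Hc Ec]] := plift _ _ Hb.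
  have [d Hd ->] : exists2 d, p d = 0 & b = c + d.
    by exists (b - c); [rewrite (linB pl) Ec subrr | rewrite addrC subrK].
  exists (lbr f c a + lbr f a c), (lbr f a d + lbr f d a); split.
    by rewrite lowlieSS; apply: span_gen; exists c, a.
  split; first by apply: span_gen; exists a, d.
  by rewrite lbrDr lbrDl addrACA [lbr f c a + _]addrC.
have fs_p : forall x, lie_br F (fun x => lowlie g m.+2 (p x)) x -> p x = 0.
  apply: (span_min (T := fun x => p x = 0)); first exact: kernel_subsp.
  move=> y [a [b [_ [Hb ->]]]].
  rewrite (linD pl) !pbr; apply: Hnil.1.
  rewrite lowlieSS addrC; apply: span_gen; exists (p b), (p a); split=> //.
have [pi1l pi1s pi1W] := H1.
have [pi2l pi2s pi2W] := H2.
have [pi3l pi3s pi3W] := H3.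
have rsub : subsp (kernel p) by exact: kernel_subsp.
have ssub : subsp (fun x => lowlie g m.+2 (p x)).
  exact: (preim_subsp pl (lowlie_subsp _ _)).
have ffsub : subsp (lie_br F F) by exact: span_subsp.
have [alpha alphaE] : exists alpha : {linear Q1 -> Q2},
    forall u, lowlie f m.+3 u -> alpha (pi1 u) = pi2 u.
  apply: (lift_lin H1 pi2l (lowlie_subsp _ _)) => u Hu [Hw _].
  by apply/(pi2W u _).2 => //; split; [exact: fk1_r | exact: (sub_ff m.+1)].
have [beta betaE] : exists beta : {linear Q2 -> Q3},
    forall u, schur_num (kernel p) u -> beta (pi2 u) = pi3 u.
  apply: (lift_lin H2 pi3l (subspI rsub ffsub)) => u [Hu1 Hu2] Hw.
  apply/(pi3W u _).2; first by split=> //; exact: r_s.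
  by move: Hw; apply: lie_br_mono => // x Hx; exact: r_s.
have [gamma gammaE] : exists gamma : {linear Q3 -> lcarrier g},
    forall u, schur_num (fun y => lowlie g m.+2 (p y)) u -> gamma (pi3 u) = p u.
  apply: (lift_lin H3 pl (subspI ssub ffsub)) => u _ Hw.
  exact: fs_p.
exists alpha, beta, gamma; split => //; split.
- move=> u; have [y Hy <-] := pi1s u; rewrite alphaE // => E.
  apply: (pi1W y Hy).2; split => //.
  by apply: ((pi2W y _).1 E); split; [exact: fk1_r | exact: (sub_ff m.+1)].
- move=> v; split.
    have [x Hx <-] := pi2s v; rewrite betaE // => E.
    have Hxs : schur_num (fun y => lowlie g m.+2 (p y)) x.
      by split; [exact: (r_s x Hx.1) | exact: Hx.2].
    have [y [z [Hy [Hz Exz]]]] := fs_dec x ((pi3W x Hxs).1 E).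
    exists (pi1 y); rewrite alphaE //.
    have Hz' : schur_num (kernel p) z.
      have -> : z = x - y by rewrite Exz addrC addKr.
      split; first by rewrite /kernel (linB pl) Hx.1 fk1_r // subrr.
      by apply: subspB => //; [exact: Hx.2 | exact: (sub_ff m.+1)].
    by rewrite Exz (linD pi2l) ((pi2W z Hz').2 Hz) addr0.
  move=> [u <-]; have [y Hy <-] := pi1s u.
  have Hyr : schur_num (kernel p) y by split; [exact: fk1_r | exact: (sub_ff m.+1)].
  rewrite alphaE // betaE //; apply/(pi3W y _).2; last exact: fk1_fs.
  by split; [exact: (r_s y Hyr.1) | exact: Hyr.2].
- move=> w; split.
    have [x Hx <-] := pi3s w; rewrite gammaE // => E.
    by exists (pi2 x); rewrite betaE //; split => //; exact: Hx.2.
  move=> [v <-]; have [x Hx <-] := pi2s v.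
  have Hxs : schur_num (fun y => lowlie g m.+2 (p y)) x.
    by split; [exact: (r_s x Hx.1) | exact: Hx.2].
  by rewrite betaE // gammaE //; exact: Hx.1.
- move=> z; split.
    move=> Hz; have [x [Hx <-]] := plift _ _ Hz.
    exists (pi3 x); rewrite gammaE //; split; [exact: pmap | exact: (sub_ff m)].
  move=> [w <-]; have [x Hx <-] := pi3s w; rewrite gammaE //; exact: Hx.1.
Qed.
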